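(* Let $n\ge2$, $r\ge1$, and let $\mathbf Z_\vartriangle(n,r)\subseteq\mathrm{End}_{\mathbb Q(v)}(\boldsymbol\Omega^{\otimes r})$ be as in the context. Then the set $$\{\sigma_1^{\lambda_1}\cdots\sigma_{r-1}^{\lambda_{r-1}}\sigma_r^{\lambda_r}\mid \lambda_1,\dots,\lambda_{r-1}\in\mathbb N,\ \lambda_r\in\mathbb Z\}$$ is a $\mathbb Q(v)$-basis of $\mathbf Z_\vartriangle(n,r)$; in other words $\mathbf Z_\vartriangle(n,r)$ is a polynomial ring in $\sigma_1,\dots,\sigma_{r-1}$ over the Laurent polynomial ring $\mathbb Q(v)[\sigma_r,\sigma_r^{-1}]$.
   Context: $\boldsymbol\Omega$ is the $\mathbb Q(v)$-space with basis $\{\omega_s\}_{s\in\mathbb Z}$ and $\boldsymbol\Omega^{\otimes r}$ has basis $\omega_{\mathbf i}=\omega_{i_1}\otimes\cdots\otimes\omega_{i_r}$, $\mathbf i\in\mathbb Z^r$. For $1\le s\le r$ let $\phi_s$ be the invertible linear map $\omega_{\mathbf i}\mapsto\omega_{\mathbf i-n\mathbf e_s}$ (subtract $n$ from the $s$-th index); the $\phi_s$ commute. Let $\sigma_s$ ($1\le s\le r$) be the $s$-th elementary symmetric polynomial in $\phi_1,\dots,\phi_r$. Let $\mathfrak p_m=\sum_{s=1}^r\phi_s^m$ and $\mathfrak q_m=\sum_{s=1}^r\phi_s^{-m}$, and let $\mathbf Z_\vartriangle(n,r)$ be the $\mathbb Q(v)$-subalgebra generated by all $\mathfrak p_m,\mathfrak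 q_m$ ($m\ge1$); it coincides with the subalgebra generated by $\sigma_1,\dots,\sigma_r,\sigma_r^{-1}$. *)

(* Defs.v *)
From HB Require Import structures.
From mathcomp Require Import all_boot all_order all_algebra.
From mathcomp Require Import fraction.
From mathcomp Require Import finmap.
From mathcomp.multinomials Require Import monalg.
Unset Printing Implicit Defensive.
Import Order.TTheory GRing.Theory Num.Theory.
Local Open Scope ring_scope.

Definition Qv : fieldType := {fraction {poly rat}}.

Definition idx (r : nat) := {ffun 'I_r -> int}.

(* Omega^{(x) r}: free Q(v)-module with basis omega_i, i in Z^r
   (finitely supported functions Z^r -> Q(v)); omega_i = << i >>. *)
Definition Om (r : nat) := {malg Qv[idx r]}.

Definition op (r : nat) := Om r -> Om r.

Definition shift r (c : int) (s : 'I_r) (i : idx r) : idx r :=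
  [ffun k => i k + (if k == s then c else 0)].

Definition on_basis r (f : idx r -> idx r) : op r :=
  fun x => \sum_(i <- msupp x) x@_i *: << f i >>.

Definition phi n r (s : 'I_r) : op r := on_basis r (shift r (- (n%:Z)) s).
Definition phi_inv n r (s : 'I_r) : op r := on_basis r (shift r (n%:Z) s).

Definition op_add r (f g : op r) : op r := fun x => f x + g x.
Definition op_scale r (c : Qv) (f : op r) : op r := fun x => c *: f x.

(* composition of the phi_s, s in S (they commute, so the order is irrelevant) *)
Definition phi_set n r (S : {set 'I_r}) : op r :=
  foldr (fun s f => phi n r s \o f) id (enum S).

Definition sigma n r (k : nat) : op r :=
  fun x => \sum_(S : {set 'I_r} | #|S| == k) phi_set n r S x.

Definition sigma_r_inv n r : op r :=
  foldr (fun s f => phi_inv n r s \o f) id (enum 'I_r).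

Definition sigma_r_pow n r (z : int) : op r :=
  match z with
  | Posz k => iter k (sigma n r r)
  | Negz k => iter k.+1 (sigma_r_inv n r)
  end.

Definition pm n r (m : nat) : op r := fun x => \sum_(s < r) iter m (phi n r s) x.
Definition qm n r (m : nat) : op r := fun x => \sum_(s < r) iter m (phi_inv n r s) x.

(* Z_Delta(n,r): the Q(v)-subalgebra of End(Omega^{(x) r}) generated by
   all p_m, q_m (m >= 1). *)
Inductive inZ n r : op r -> Prop :=
| inZ_one : inZ n r (@id (Om r))
| inZ_p m : (0 < m)%N -> inZ n r (pm n r m)
| inZ_q m : (0 < m)%N -> inZ n r (qm n r m)
| inZ_add f g : inZ n r f -> inZ n r g -> inZ n r (op_add r f g)
| inZ_scale c f : inZ n r f -> inZ n r (op_scale r c f)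
| inZ_comp f g : inZ n r f -> inZ n r g -> inZ n r (f \o g).

Definition lam (r : nat) := ({ffun 'I_r.-1 -> nat} * int)%type.

Definition mono n r (l : lam r) : op r :=
  foldr (fun i f => iter (l.1 i) (sigma n r (nat_of_ord i).+1) \o f)
        (sigma_r_pow n r l.2) (enum 'I_r.-1).

(* Main.v *)
Require Import Defs.
From HB Require Import structures.
From mathcomp Require Import all_boot all_order all_algebra.
From mathcomp Require Import fraction.
From mathcomp Require Import ring.
From mathcomp Require Import fingroup perm.
From mathcomp Require Import finmap.
From mathcomp.multinomials Require Import monalg.
From Stdlib Require Import FunctionalExtensionality.
Set Implicit Arguments. Unset Strict Implicit.
Unset Printing Implicit Defensive.
Import Order.TTheory GRing.Theory Num.Theory.
Local Open Scope ring_scope.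
#[local] Remove Hints Pdiv.CommonIdomain.divp0 Pdiv.CommonIdomain.divp1 Pdiv.CommonIdomain.mod0p Pdiv.CommonIdomain.modp0 Pdiv.CommonIdomain.modp1 Pdiv.Idomain.divp0 Pdiv.Idomain.divp1 Pdiv.Idomain.mod0p Pdiv.Idomain.modp0 Pdiv.Idomain.modp1 ceil0 ceil1 divp0 divp1 floor0 floor1 mod0p modp0 modp1 trunc0 trunc1 : core.

Section Ext.
Context (r : nat) (V : lmodType Qv).
Implicit Types (a b : Om r) (F : idx r -> V).

Definition ext F a : V := \sum_(k <- msupp a) a@_k *: F k.

Lemma extEw F a (D : {fset idx r}) : (msupp a `<=` D)%fset ->
  ext F a = \sum_(k <- D) a@_k *: F k.
Proof.
move=> le; rewrite /ext (big_fset_incl _ le) // => k _ /mcoeff_outdom ->.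
by rewrite scale0r.
Qed.

Lemma extD F a b : ext F (a + b) = ext F a + ext F b.
Proof.
set D := (msupp a `|` msupp b `|` msupp (a+b))%fset.
rewrite !(@extEw F _ D) ?/D -?big_split /=; try by apply/fsubsetP=> k kin; rewrite !inE kin ?orbT.
by apply: eq_bigr => k _; rewrite mcoeffD scalerDl.
Qed.

Lemma extZ F c a : ext F (c *: a) = c *: ext F a.
Proof.
rewrite (@extEw F _ (msupp a)) ?msuppZ_le // /ext scaler_sumr.
by apply: eq_bigr => k _; rewrite mcoeffZ scalerA.
Qed.

Lemma ext0 F : ext F 0 = 0.
Proof. by rewrite /ext msupp0 big_nil. Qed.

Lemma extU F k : ext F << k >> = F k.
Proof. by rewrite /ext msuppU oner_eq0 big_seq_fset1 mcoeffUU scale1r. Qed.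

Lemma ext_sum F (I : Type) (s : seq I) (G : I -> Om r) :
  ext F (\sum_(i <- s) G i) = \sum_(i <- s) ext F (G i).
Proof.
elim: s => [|i s IH]; first by rewrite !big_nil ext0.
by rewrite !big_cons extD IH.
Qed.

End Ext.

Lemma malgUZ (r : nat) (c : Qv) (k : idx r) : << c *g k >> = c *: (<< k >> : Om r).
Proof. by apply/malgP => j; rewrite mcoeffZ !mcoeffU mulr_natr. Qed.

Lemma ext_id r (a : Om r) : ext (fun k => << k >>) a = a.
Proof.
rewrite {2}[a]monalgE /ext; elim: (enum_fset (msupp a)) => [|k s IH]; first by rewrite !big_nil.
rewrite !big_cons; congr (_ + _); [by rewrite [RHS]malgUZ | exact: IH].
Qed.

Lemma lin_eq r (V : lmodType Qv) (G1 G2 : Om r -> V) :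
  (forall a b, G1 (a + b) = G1 a + G1 b) -> (forall c a, G1 (c *: a) = c *: G1 a) ->
  (forall a b, G2 (a + b) = G2 a + G2 b) -> (forall c a, G2 (c *: a) = c *: G2 a) ->
  (forall k, G1 << k >> = G2 << k >>) -> forall a, G1 a = G2 a.
Proof.
move=> D1 Z1 D2 Z2 E a; rewrite -(ext_id a) /ext.
elim: (enum_fset (msupp a)) => [|k s IH].
  by rewrite big_nil -(scale0r 0) Z1 Z2 !scale0r.
by rewrite big_cons D1 D2 IH Z1 Z2 E.
Qed.

Section LauRing.
Context (r : nat).
Implicit Types (a b c : Om r).

Definition mulL0 a b : Om r := ext (fun k => ext (fun j => << k + j >>) b) a.
Fact mulL_key : unit. Proof. exact: tt. Qed.
Definition mulL := locked_with mulL_key mulL0.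
Lemma mulLE : mulL = mulL0. Proof. exact: unlock. Qed.

Lemma mulL_swap a b : mulL a b = ext (fun j => ext (fun k => << k + j >>) a) b.
Proof.
rewrite mulLE /mulL0 /ext.
transitivity (\sum_(k <- msupp a) \sum_(j <- msupp b) (a@_k * b@_j) *: (<< k + j >> : Om r)).
  apply: eq_bigr => k _; rewrite scaler_sumr; apply: eq_bigr => j _; exact: scalerA.
rewrite exchange_big /=; apply: eq_bigr => j _.
rewrite scaler_sumr; apply: eq_bigr => k _.
by rewrite scalerA mulrC.
Qed.

Lemma mulLC a b : mulL a b = mulL b a.
Proof.
rewrite mulL_swap mulLE /mulL0.
have E : (fun j => ext (fun k => << k + j >>) a) = (fun k => ext (fun j => << k + j >>) a).
  apply: functional_extensionality => j.
  have E2 : (fun k : idx r => << k + j >> : Om r) = (fun k => << j + k >>).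
    by apply: functional_extensionality => k; rewrite addrC.
  by rewrite E2.
exact: (congr1 (fun F => ext F b) E).
Qed.
Lemma mulLDl a b c : mulL (a + b) c = mulL a c + mulL b c.
Proof. rewrite mulLE; exact: extD. Qed.
Lemma mulLZl (x : Qv) a b : mulL (x *: a) b = x *: mulL a b.
Proof. rewrite mulLE; exact: extZ. Qed.
Lemma mulLDr a b c : mulL a (b + c) = mulL a b + mulL a c.
Proof. by rewrite !(mulLC a) mulLDl. Qed.
Lemma mulLZr (x : Qv) a b : mulL a (x *: b) = x *: mulL a b.
Proof. by rewrite !(mulLC a) mulLZl. Qed.
Lemma mulLUU (k j : idx r) : mulL << k >> << j >> = << k + j >>.
Proof. by rewrite mulLE /mulL0 !extU. Qed.

Lemma mul1L a : mulL << 0 >> a = a.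
Proof.
rewrite mulLE /mulL0 extU -[RHS]ext_id.
have E2 : (fun k : idx r => << 0 + k >> : Om r) = (fun k => << k >>).
  by apply: functional_extensionality => k; rewrite add0r.
by rewrite E2.
Qed.

Lemma mulLA a b c : mulL a (mulL b c) = mulL (mulL a b) c.
Proof.
move: a; apply: lin_eq => [x y|x y|x y|x y|k].
- by rewrite mulLDl.
- by rewrite mulLZl.
- by rewrite !mulLDl.
- by rewrite !mulLZl.
move: b; apply: lin_eq => [x y|x y|x y|x y|j].
- by rewrite mulLDl mulLDr.
- by rewrite mulLZl mulLZr.
- by rewrite mulLDr mulLDl.
- by rewrite mulLZr mulLZl.
move: c; apply: lin_eq => [x y|x y|x y|x y|i].
- by rewrite !mulLDr.
- by rewrite !mulLZr.
- by rewrite !mulLDr.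
- by rewrite !mulLZr.
by rewrite !mulLUU addrA.
Qed.

Lemma oneL_neq0 : (<< 0 >> : Om r) != 0.
Proof. by rewrite monalgU_eq0 oner_eq0. Qed.

End LauRing.

Definition Lau r := Om r.
HB.instance Definition _ r := GRing.Lmodule.on (Lau r).
HB.instance Definition _ r := GRing.Zmodule_isComNzRing.Build (Lau r)
  (@mulLA r) (@mulLC r) (@mul1L r) (@mulLDl r) (@oneL_neq0 r).
HB.instance Definition _ r := GRing.Lmodule_isLalgebra.Build Qv (Lau r)
  (fun x a b => esym (@mulLZl r x a b)).
HB.instance Definition _ r := GRing.Lalgebra_isComAlgebra.Build Qv (Lau r).


Lemma idxD r (i j : idx r) k : (i + j) k = i k + j k.
Proof. exact: ffunE. Qed.
Lemma idxN r (i : idx r) k : (- i) k = - i k.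
Proof. exact: ffunE. Qed.
Lemma idx0 r k : (0 : idx r) k = 0.
Proof. exact: ffunE. Qed.

Section Newton.
Context (R : comRingType) (r : nat) (x : 'I_r -> R).

Definition es k : R := \sum_(S : {set 'I_r} | #|S| == k) \prod_(i in S) x i.
Definition esx s k : R := \sum_(S : {set 'I_r} | (#|S| == k) && (s \notin S)) \prod_(i in S) x i.
Definition ps m : R := \sum_(i < r) x i ^+ m.

Lemma es_in s k : \sum_(S : {set 'I_r} | (#|S| == k.+1) && (s \in S)) \prod_(i in S) x i
  = x s * esx s k.
Proof.
rewrite (reindex_onto (fun S' => s |: S') (fun S => S :\ s)); last first.
  by move=> S /andP[_ sS]; rewrite setD1K.
rewrite /esx mulr_sumr; apply: eq_big => S'.
  rewrite setU11 andbT.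
  case sS: (s \in S') => /=.
    rewrite andbF; apply/negbTE; apply/andP => [[_ /eqP E]].
    by move: sS; rewrite -E !inE eqxx.
  rewrite andbT cardsU1 sS /= add1n eqSS.
  suff -> : (s |: S') :\ s == S' by rewrite andbT.
  apply/eqP/setP => i; rewrite !inE; case: eqP => [->|]; first by rewrite sS.
  by [].
by move=> /andP[_ /eqP E]; rewrite big_setU1 //= -E !inE eqxx.
Qed.

Lemma es_split s k : es k.+1 = esx s k.+1 + x s * esx s k.
Proof.
by rewrite /es (bigID (fun S : {set 'I_r} => s \in S)) /= addrC es_in.
Qed.

Lemma es0 : es 0 = 1.
Proof.
rewrite /es (big_pred1 set0) ?big_set0 // => S; by rewrite cards_eq0.
Qed.

Lemma esx0 s : esx s 0 = 1.
Proof.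
rewrite /esx (big_pred1 set0) ?big_set0 // => S.
rewrite cards_eq0 /=; case: eqP => [->|] //=; by rewrite inE.
Qed.

Lemma esx_formula s k :
  esx s k = \sum_(j < k.+1) (-1) ^+ j * x s ^+ j * es (k - j)%N.
Proof.
elim: k => [|k IH].
  by rewrite big_ord1 esx0 es0 !expr0 !mul1r.
have -> : esx s k.+1 = es k.+1 - x s * esx s k by rewrite (es_split s) addrK.
rewrite IH [RHS]big_ord_recl /= !expr0 !mul1r subn0; congr (_ + _).
rewrite mulr_sumr -sumrN; apply: eq_bigr => j _.
by rewrite /bump /= add1n !exprS subSS; ring.
Qed.

Lemma card_sum k : \sum_(S : {set 'I_r} | #|S| == k.+1) \sum_(s in S) \prod_(i in S) x i
  = k.+1%:R * es k.+1.
Proof.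
rewrite /es mulr_sumr; apply: eq_bigr => S /eqP cS.
by rewrite sumr_const cS mulr_natl.
Qed.

Lemma newton k : k.+1%:R * es k.+1 = \sum_(j < k.+1) (-1) ^+ j * es (k - j)%N * ps j.+1.
Proof.
rewrite -card_sum.
rewrite (exchange_big_dep predT) //=.
transitivity (\sum_(s < r) x s * esx s k).
  apply: eq_bigr => s _; rewrite -es_in; apply: eq_bigl => S; by rewrite andbC.
transitivity (\sum_(s < r) \sum_(j < k.+1) x s * ((-1) ^+ j * x s ^+ j * es (k - j)%N)).
  by apply: eq_bigr => s _; rewrite esx_formula mulr_sumr.
rewrite exchange_big /=; apply: eq_bigr => j _.
rewrite /ps mulr_sumr; apply: eq_bigr => s _.
by rewrite exprS; ring.
Qed.


Lemma es_full : es r = \prod_(i < r) x i.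
Proof.
rewrite /es (big_pred1 [set: 'I_r]); last first.
  move=> S /=; rewrite eqEcard subsetT cardsT card_ord /=.
  apply/eqP/idP => [->//|le]; apply/eqP; rewrite eqn_leq le andbT.
  by rewrite -[X in (_ <= X)%N](card_ord r) max_card.
by apply: eq_bigl => i; rewrite inE.
Qed.

End Newton.

Section Ops.
Context (n r : nat).
Implicit Types (x : Om r) (a : Lau r).

Definition mulop a : op r := fun x => a * (x : Lau r).

Definition ce (s : 'I_r) : idx r := [ffun k => if k == s then - (n%:Z) else 0].
Definition Y (s : 'I_r) : Lau r := << ce s >>.
Definition Yi (s : 'I_r) : Lau r := << - ce s >>.

Lemma mulUE (k : idx r) x : (<< k >> : Lau r) * (x : Lau r) = ext (fun j => << k + j >>) x.
Proof. by rewrite [LHS]/(_ * _) /= mulLE /mulL0 extU. Qed.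

Lemma phiE s x : phi n r s x = Y s * (x : Lau r).
Proof.
rewrite /Y mulUE /phi /on_basis /ext.
apply: eq_bigr => i _; congr (_ *: << _ >>).
by apply/ffunP => k; rewrite ffunE idxD /ce ffunE addrC.
Qed.

Lemma phi_invE s x : phi_inv n r s x = Yi s * (x : Lau r).
Proof.
rewrite /Yi mulUE /phi_inv /on_basis /ext.
apply: eq_bigr => i _; congr (_ *: << _ >>).
by apply/ffunP => k; rewrite ffunE idxD idxN /ce ffunE addrC; case: (k == s); rewrite ?opprK ?oppr0.
Qed.

Lemma iter_mulop a (f : op r) m x : (forall y, f y = a * (y : Lau r)) ->
  iter m f x = a ^+ m * (x : Lau r).
Proof.
move=> fE; elim: m => [|m IH] /=; first by rewrite expr0 mul1r.
by rewrite fE IH exprS mulrA.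
Qed.

Lemma phi_setE (S : {set 'I_r}) x : phi_set n r S x = (\prod_(s in S) Y s) * (x : Lau r).
Proof.
rewrite /phi_set -big_enum /=; elim: (enum S) => [|s l IH] /=.
  by rewrite big_nil mul1r.
by rewrite big_cons phiE IH mulrA.
Qed.

Definition E k : Lau r := \sum_(S : {set 'I_r} | #|S| == k) \prod_(s in S) Y s.

Lemma sigmaE k x : sigma n r k x = E k * (x : Lau r).
Proof.
rewrite /sigma /E mulr_suml; apply: eq_bigr => S _; exact: phi_setE.
Qed.

Definition Ei : Lau r := \prod_(s : 'I_r) Yi s.

Lemma sigma_r_invE x : sigma_r_inv n r x = Ei * (x : Lau r).
Proof.
rewrite /sigma_r_inv /Ei -big_enum /=; elim: (enum _) => [|s l IH] /=.
  by rewrite big_nil mul1r.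
by rewrite big_cons phi_invE IH mulrA.
Qed.

Definition powz (z : int) : Lau r :=
  match z with Posz k => E r ^+ k | Negz k => Ei ^+ k.+1 end.

Lemma sigma_r_powE z x : sigma_r_pow n r z x = powz z * (x : Lau r).
Proof.
case: z => k; rewrite /sigma_r_pow /powz.
  by apply: iter_mulop => y; exact: sigmaE.
by apply: iter_mulop => y; exact: sigma_r_invE.
Qed.

Definition M (l : lam r) : Lau r :=
  (\prod_(i <- enum 'I_r.-1) E (nat_of_ord i).+1 ^+ l.1 i) * powz l.2.

Lemma monoE l x : mono n r l x = M l * (x : Lau r).
Proof.
rewrite /mono /M; elim: (enum _) => [|i s IH] /=.
  by rewrite big_nil mul1r sigma_r_powE.
rewrite big_cons (@iter_mulop _ (sigma n r (nat_of_ord i).+1) _ _ (sigmaE _)) IH.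
by rewrite !mulrA.
Qed.

Definition P m : Lau r := \sum_(s < r) Y s ^+ m.
Definition Q m : Lau r := \sum_(s < r) Yi s ^+ m.

Lemma pmE m x : pm n r m x = P m * (x : Lau r).
Proof.
rewrite /pm /P mulr_suml; apply: eq_bigr => s _; apply: iter_mulop => y; exact: phiE.
Qed.

Lemma qmE m x : qm n r m x = Q m * (x : Lau r).
Proof.
rewrite /qm /Q mulr_suml; apply: eq_bigr => s _; apply: iter_mulop => y; exact: phi_invE.
Qed.

End Ops.

Lemma QvnatN0 k : (k.+1%:R : Qv) != 0.
Proof.
have -> : (k.+1%:R : Qv) = FracField.tofrac (k.+1%:R : {poly rat}) by rewrite rmorph_nat.
rewrite tofrac_eq -polyC_natr polyC_eq0.
by rewrite pnatr_eq0.
Qed.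

Section Claim1.
Context (n r : nat).
Local Notation G a := (inZ n r (mulop a)).

Lemma mulop_ext (f : op r) a : (forall x, f x = a * (x : Lau r)) -> f = mulop a.
Proof. by move=> fE; apply: functional_extensionality => x; rewrite fE. Qed.

Lemma G1 : G 1.
Proof.
have -> : mulop (1 : Lau r) = @id (Om r).
  by apply: functional_extensionality => x; rewrite /mulop mul1r.
exact: inZ_one.
Qed.

Lemma GD a b : G a -> G b -> G (a + b).
Proof.
move=> Ha Hb; have -> : mulop (a + b) = op_add r (mulop a) (mulop b).
  by apply: functional_extensionality => x; rewrite /mulop /op_add mulrDl.
exact: inZ_add.
Qed.

Lemma GZ c a : G a -> G (c *: a).
Proof.
move=> Ha; have -> : mulop (c *: a) = op_scale r c (mulop a).
  by apply: functional_extensionality => x; rewrite /mulop /op_scale; exact: mulLZl.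
exact: inZ_scale.
Qed.

Lemma GM a b : G a -> G b -> G (a * b).
Proof.
move=> Ha Hb; have -> : mulop (a * b) = mulop a \o mulop b.
  by apply: functional_extensionality => x; rewrite /mulop /= mulrA.
exact: inZ_comp.
Qed.

Lemma GX a k : G a -> G (a ^+ k).
Proof.
move=> Ha; elim: k => [|k IH]; first by rewrite expr0; exact: G1.
by rewrite exprS; apply: GM.
Qed.

Lemma Gsum (I : Type) (s : seq I) (F : I -> Lau r) :
  (forall i, G (F i)) -> G (\sum_(i <- s) F i).
Proof.
move=> HF; elim: s => [|i s IH].
  rewrite big_nil -(scale0r (1 : Lau r)); apply: GZ; exact: G1.
by rewrite big_cons; apply: GD.
Qed.

Lemma Gprod (I : Type) (s : seq I) (F : I -> Lau r) :
  (forall i, G (F i)) -> G (\prod_(i <- s) F i).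
Proof.
move=> HF; elim: s => [|i s IH]; first by rewrite big_nil; exact: G1.
by rewrite big_cons; apply: GM.
Qed.

Lemma GN1 : G (-1).
Proof. rewrite -scaleN1r; apply: GZ; exact: G1. Qed.

Lemma G_es (x : 'I_r -> Lau r) :
  (forall m, (0 < m)%N -> G (ps x m)) -> forall k, G (es x k).
Proof.
move=> Hp k; elim/ltn_ind: k => -[|k] IH.
  rewrite es0; exact: G1.
have -> : es x k.+1 = (k.+1%:R : Qv)^-1 *: (k.+1%:R * es x k.+1).
  by rewrite mulr_natl -scaler_nat scalerA mulVf ?QvnatN0 // scale1r.
apply: GZ; rewrite newton; apply: Gsum => j; apply: GM; last exact: Hp.
apply: GM; first exact: GX GN1.
apply: IH; rewrite ltnS; exact: leq_subr.
Qed.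

Lemma GP m : (0 < m)%N -> G (P n r m).
Proof. move=> m0; rewrite -(mulop_ext (@pmE n r m)); exact: inZ_p. Qed.
Lemma GQ m : (0 < m)%N -> G (Q n r m).
Proof. move=> m0; rewrite -(mulop_ext (@qmE n r m)); exact: inZ_q. Qed.

Lemma GE k : G (E n r k).
Proof. exact: (G_es GP). Qed.

Lemma GEi : G (Ei n r).
Proof. rewrite /Ei -es_full; exact: (G_es GQ). Qed.

Lemma Gpowz z : G (powz n r z).
Proof. case: z => k /=; apply: GX; [exact: GE | exact: GEi]. Qed.

Lemma GMl l : G (@M n r l).
Proof.
apply: GM; last exact: Gpowz.
apply: Gprod => i; apply: GX; exact: GE.
Qed.

Lemma mono_inZ l : inZ n r (mono n r l).
Proof. rewrite (mulop_ext (@monoE n r l)); exact: GMl. Qed.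

End Claim1.

Section Span.
Context (n r : nat).
Local Notation Y := (@Y n r).
Local Notation Yi := (@Yi n r).
Local Notation E := (E n r).
Local Notation Ei := (Ei n r).
Local Notation powz := (powz n r).
Local Notation M := (@M n r).

Lemma one_Lau : (1 : Lau r) = << 0 >>.
Proof. reflexivity. Qed.

Lemma mulUU (k j : idx r) : (<< k >> : Lau r) * << j >> = << k + j >>.
Proof. exact: mulLUU. Qed.

Lemma YYi s : Y s * Yi s = 1.
Proof. by rewrite /Y /Yi mulUU subrr. Qed.

Lemma Er : E r = \prod_(s < r) Y s.
Proof. exact: es_full. Qed.

Lemma ErEi : E r * Ei = 1.
Proof.
rewrite Er /Ei -big_split /=; apply: big1 => s _; exact: YYi.
Qed.

Lemma powz_sub a b : powz (a%:Z - b%:Z) = E r ^+ a * Ei ^+ b.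
Proof.
case: (leqP b a) => [ba|ab].
  rewrite subzn //= -{2}(subnK ba) exprD -mulrA -exprMn ErEi expr1n mulr1.
  reflexivity.
have -> : a%:Z - b%:Z = Negz (b - a).-1.
  rewrite NegzE prednK ?subn_gt0 // -opprB subzn //; exact: ltnW.
rewrite /= prednK ?subn_gt0 // -{2}(subnK (ltnW ab)) exprD mulrCA -exprMn ErEi.
by rewrite expr1n mulr1.
Qed.

Lemma int_sub (z : int) : exists a b : nat, z = a%:Z - b%:Z.
Proof.
case: z => k; first by exists k, 0%N; rewrite subr0.
by exists 0%N, k.+1; rewrite NegzE sub0r.
Qed.

Lemma powzD z1 z2 : powz (z1 + z2) = powz z1 * powz z2.
Proof.
have [a1 [b1 ->]] := int_sub z1; have [a2 [b2 ->]] := int_sub z2.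
have -> : a1%:Z - b1%:Z + (a2%:Z - b2%:Z) = (a1 + a2)%N%:Z - (b1 + b2)%N%:Z.
  by rewrite !PoszD; ring.
by rewrite !powz_sub !exprD; ring.
Qed.

Definition addl (l l' : lam r) : lam r := ([ffun i => l.1 i + l'.1 i]%N, l.2 + l'.2).

Lemma M_add l l' : M (addl l l') = M l * M l'.
Proof.
rewrite /M /addl /= powzD.
have -> : \prod_(i <- enum 'I_r.-1) E (nat_of_ord i).+1 ^+ [ffun i => l.1 i + l'.1 i]%N i
  = (\prod_(i <- enum 'I_r.-1) E (nat_of_ord i).+1 ^+ l.1 i) *
    \prod_(i <- enum 'I_r.-1) E (nat_of_ord i).+1 ^+ l'.1 i.
  by rewrite -big_split /=; apply: eq_bigr => i _; rewrite ffunE exprD.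
by rewrite mulrACA.
Qed.

Inductive Sp : Lau r -> Prop :=
| Sp0 : Sp 0
| SpC c l v : Sp v -> Sp (c *: M l + v).

Lemma SpD a b : Sp a -> Sp b -> Sp (a + b).
Proof.
move=> Ha Hb; elim: Ha => [|c l v _ IH]; first by rewrite add0r.
rewrite -addrA; exact: SpC.
Qed.

Lemma SpZ c a : Sp a -> Sp (c *: a).
Proof.
elim => [|d l v _ IH]; first by rewrite scaler0; exact: Sp0.
rewrite scalerDr scalerA; exact: SpC.
Qed.

Lemma SpMM l a : Sp a -> Sp (a * M l).
Proof.
elim => [|d l' v _ IH]; first by rewrite mul0r; exact: Sp0.
rewrite mulrDl -scalerAl -M_add; exact: SpC.
Qed.

Lemma SpM a b : Sp a -> Sp b -> Sp (a * b).
Proof.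
move=> Ha; elim => [|d l v _ IH]; first by rewrite mulr0; exact: Sp0.
rewrite mulrDr -scalerAr; apply: SpD => //; apply: SpZ; exact: SpMM.
Qed.

Lemma SpM1 l : Sp (M l).
Proof. rewrite -[M l]addr0 -[M l]scale1r; apply: SpC; exact: Sp0. Qed.

Lemma Sp_sum (I : Type) (s : seq I) (F : I -> Lau r) :
  (forall i, Sp (F i)) -> Sp (\sum_(i <- s) F i).
Proof.
move=> HF; elim: s => [|i s IH]; first by rewrite big_nil; exact: Sp0.
by rewrite big_cons; apply: SpD.
Qed.

End Span.

Lemma OmZ r (c : Qv) (a : Om r) k : (c *: a)@_k = c * a@_k.
Proof. exact: mcoeffZ. Qed.

Lemma coef_sum0 r (I : Type) (s : seq I) (c : I -> Qv) (g : I -> idx r) k :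
  (\sum_(i <- s) c i *: (<< g i >> : Om r))@_k = \sum_(i <- s) c i * (g i == k)%:R.
Proof.
elim: s => [|i s IH]; first by rewrite !big_nil mcoeff0.
rewrite !big_cons mcoeffD OmZ IH mcoeffU.
by rewrite mulr_natr.
Qed.

Lemma coef_sum r (I : eqType) (s : seq I) (c : I -> Qv) (g : I -> idx r) i0 :
  uniq s -> {in s &, injective g} -> i0 \in s ->
  (\sum_(i <- s) c i *: (<< g i >> : Om r))@_(g i0) = c i0.
Proof.
move=> us ig i0s; rewrite coef_sum0 (bigD1_seq i0) //= eqxx mulr1.
rewrite big_seq_cond big1 ?addr0 // => i /andP[iis ni].
case: eqP => [/(ig _ _ iis i0s) E|]; last by rewrite mulr0.
by rewrite E eqxx in ni.
Qed.

Lemma UX r (k : idx r) a : (<< k >> : Lau r) ^+ a = << k *+ a >>.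
Proof.
elim: a => [|a IH]; first by rewrite expr0 mulr0n.
by rewrite exprS IH mulUU mulrS.
Qed.

Lemma Uprod r (I : Type) (s : seq I) (F : I -> idx r) :
  \prod_(i <- s) (<< F i >> : Lau r) = << \sum_(i <- s) F i >>.
Proof.
elim: s => [|i s IH]; first by rewrite !big_nil.
by rewrite !big_cons IH mulUU.
Qed.

From mathcomp.multinomials Require Import mpoly.

Section Poly.
Context (n r : nat).
Local Notation R := r.+1.
Local Notation ev := (mmap (in_alg (Lau R)) (@Y n R)).
Local Notation S := [tuple mesym R Qv i.+1 | i < R].

Lemma evZ c (p : mpoly.mpoly R Qv) : ev (c *: p) = c *: ev p.
Proof. by rewrite mmapZ mulr_algl. Qed.

Lemma evX (i : 'I_R) : ev 'X_i = Y n i.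
Proof. by rewrite mmapX mmap1U. Qed.

Lemma ev_mesym k : ev (mesym R Qv k) = E n R k.
Proof.
rewrite /mesym rmorph_sum /=; apply: eq_bigr => h _.
rewrite rmorph_prod /=; apply: eq_bigr => i _; exact: evX.
Qed.

Lemma ev_comp m : ev ('X_[m] \mPo S) = \prod_(i < R) E n R i.+1 ^+ m i.
Proof.
rewrite comp_mpolyX rmorph_prod /=; apply: eq_bigr => i _.
by rewrite rmorphXn /= tnth_mktuple ev_mesym.
Qed.

Definition lamof (m : multinom R) : lam R :=
  ([ffun i : 'I_r => m (widen_ord (leqnSn r) i)], Posz (m ord_max)).

Lemma M_lamof m : M n (lamof m) = \prod_(i < R) E n R i.+1 ^+ m i.
Proof.
rewrite /M /lamof /= big_ord_recr /=; congr (_ * _).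
rewrite big_enum /=; apply: eq_bigr => i _; by rewrite ffunE.
Qed.


Lemma Sp_ev (t : mpoly.mpoly R Qv) : @Sp n R (ev (t \mPo S)).
Proof.
rewrite comp_mpolyEX rmorph_sum /=; apply: Sp_sum => m.
rewrite evZ ev_comp -M_lamof; apply: SpZ; exact: SpM1.
Qed.

Lemma Sp_sym (f : mpoly.mpoly R Qv) : f \is symmetric -> @Sp n R (ev f).
Proof. by move=> fs; case: (sym_fundamental fs) => t [<- _]; exact: Sp_ev. Qed.

Lemma msymXi (s : {perm 'I_R}) (i : 'I_R) : msym s ('X_i : mpoly.mpoly R Qv) = 'X_(s i).
Proof. by rewrite /msym mmapX mmap1U. Qed.

Lemma sym_pow m : (\sum_(i < R) 'X_i ^+ m : mpoly.mpoly R Qv) \is symmetric.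
Proof.
apply/issymP => s; rewrite rmorph_sum /=.
transitivity (\sum_(i < R) ('X_(s i) : mpoly.mpoly R Qv) ^+ m).
  by apply: eq_bigr => i _; rewrite rmorphXn /= msymXi.
by rewrite [RHS](reindex_inj (@perm_inj _ s)).
Qed.

Lemma P_ev m : P n R m = ev (\sum_(i < R) 'X_i ^+ m).
Proof.
rewrite rmorph_sum /=; apply: eq_bigr => i _; by rewrite rmorphXn /= evX.
Qed.

Definition gq m : mpoly.mpoly R Qv := \sum_(s < R) \prod_(t < R | t != s) 'X_t ^+ m.

Lemma sym_gq m : gq m \is symmetric.
Proof.
apply/issymP => s; rewrite /gq rmorph_sum /=.
transitivity (\sum_(u < R) (fun v : 'I_R => \prod_(t < R | t != v) ('X_t : mpoly.mpoly R Qv) ^+ m) (s u)).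
  apply: eq_bigr => u _; rewrite rmorph_prod /=.
  rewrite [RHS](reindex_inj (@perm_inj _ s)) /=.
  apply: eq_big => [t|t _]; first by rewrite (inj_eq (@perm_inj _ s)).
  by rewrite rmorphXn /= msymXi.
by rewrite [RHS](reindex_inj (@perm_inj _ s)).
Qed.

Lemma Q_ev m : Q n R m = Ei n R ^+ m * ev (gq m).
Proof.
rewrite /Q /gq rmorph_sum /= mulr_sumr; apply: eq_bigr => s _.
rewrite rmorph_prod /= /Ei -prodrXl (bigD1 s) //= -mulrA -big_split /= big1 ?mulr1 // => t _.
by rewrite rmorphXn /= evX -exprMn mulrC YYi expr1n.
Qed.

End Poly.

Lemma repr_step (T : eqType) (V : lmodType Qv) (Mf : T -> V) (s : seq T)
  (c : T -> Qv) c0 l : uniq s -> exists (s' : seq T) (c' : T -> Qv),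
  uniq s' /\ c0 *: Mf l + \sum_(l0 <- s) c l0 *: Mf l0 = \sum_(l0 <- s') c' l0 *: Mf l0.
Proof.
move=> us; case ls: (l \in s).
  exists s, (fun l0 => if l0 == l then c l + c0 else c l0); split => //.
  rewrite (bigD1_seq l) //= [RHS](bigD1_seq l) //= eqxx scalerDl.
  have -> : \sum_(i <- s | i != l) (if i == l then c l + c0 else c i) *: Mf i
     = \sum_(i <- s | i != l) c i *: Mf i.
    by apply: eq_bigr => i /negbTE ->.
  by rewrite addrA [c0 *: _ + _]addrC.
exists (l :: s), (fun l0 => if l0 == l then c0 else c l0); split.
  by rewrite /= ls.
rewrite big_cons eqxx; congr (_ + _).
rewrite !big_seq; apply: eq_bigr => l0 l0s.
have -> : (l0 == l) = false by apply/negbTE; apply: contraFneq ls => <-.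
reflexivity.
Qed.

Section Spanning.
Context (n r : nat).
Local Notation R := r.+1.
Local Notation Sp := (@Sp n R).

Definition lam0 : lam R := ([ffun=> 0%N], 0).

Lemma M_lam0 : M n lam0 = 1.
Proof.
rewrite /M /lam0 /= expr0 mulr1; apply: big1 => i _; by rewrite ffunE expr0.
Qed.

Lemma Sp1 : Sp 1.
Proof. rewrite -M_lam0; exact: SpM1. Qed.

Lemma SpEi : Sp (Ei n R).
Proof.
have -> : Ei n R = M n ([ffun=> 0%N], Negz 0).
  rewrite /M /= expr1 big1 ?mul1r // => i _; by rewrite ffunE expr0.
exact: SpM1.
Qed.

Lemma SpX a k : Sp a -> Sp (a ^+ k).
Proof.
move=> Ha; elim: k => [|k IH]; first by rewrite expr0; exact: Sp1.
by rewrite exprS; apply: SpM.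
Qed.

Lemma SpP m : Sp (P n R m).
Proof. rewrite P_ev; apply: Sp_sym; exact: sym_pow. Qed.

Lemma SpQ m : Sp (Q n R m).
Proof.
rewrite Q_ev; apply: SpM; first exact: SpX SpEi.
apply: Sp_sym; exact: sym_gq.
Qed.

Lemma span_inZ T : inZ n R T -> exists a, Sp a /\ T = mulop a.
Proof.
elim => [|m _|m _|f g _ [a [Ha ->]] _ [b [Hb ->]]|c f _ [a [Ha ->]]|f g _ [a [Ha ->]] _ [b [Hb ->]]].
- exists 1; split; first exact: Sp1.
  by apply: functional_extensionality => x; rewrite /mulop mul1r.
- exists (P n R m); split; first exact: SpP.
  exact: mulop_ext (@pmE n R m).
- exists (Q n R m); split; first exact: SpQ.
  exact: mulop_ext (@qmE n R m).
- exists (a + b); split; first exact: SpD.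
  by apply: functional_extensionality => x; rewrite /mulop /op_add mulrDl.
- exists (c *: a); split; first exact: SpZ.
  by apply: functional_extensionality => x; rewrite /mulop /op_scale; symmetry; exact: mulLZl.
- exists (a * b); split; first exact: SpM.
  by apply: functional_extensionality => x; rewrite /mulop /= mulrA.
Qed.

Lemma Sp_repr a : Sp a -> exists (s : seq (lam R)) (c : lam R -> Qv),
  uniq s /\ a = \sum_(l <- s) c l *: M n l.
Proof.
elim => [|c0 l v _ [s [c [us ->]]]].
  by exists [::], (fun _ => 0); rewrite big_nil.
exact: repr_step.
Qed.

End Spanning.

Section Indep.
Context (n r : nat).
Local Notation R := r.+1.
Local Notation ev := (mmap (in_alg (Lau R)) (@Y n R)).
Local Notation S := [tuple mesym R Qv i.+1 | i < R].

Definition gm (m : multinom R) : idx R := \sum_(i < R) ce n i *+ m i.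

Lemma gmE m k : gm m k = (- (n%:Z)) *+ m k.
Proof.
rewrite /gm sum_ffunE (bigD1 k) //= big1 ?addr0.
  by rewrite ffunMnE /ce ffunE eqxx.
by move=> i ik; rewrite ffunMnE /ce ffunE eq_sym (negbTE ik) mul0rn.
Qed.

Lemma gm_inj : (0 < n)%N -> injective gm.
Proof.
move=> n0 m1 m2 E; apply/mnmP => k.
have H : (- (n%:Z)) * (m1 k)%:R = (- (n%:Z)) * (m2 k)%:R.
  by rewrite !mulr_natr -!gmE E.
have : (m1 k)%:R = (m2 k)%:R :> int.
  apply: (mulfI _ H); rewrite oppr_eq0 -lt0n; exact: n0.
by move/eqP; rewrite eqr_nat => /eqP.
Qed.

Lemma mmap1_gm m : mmap1 (@Y n R) m = << gm m >>.
Proof.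
rewrite /mmap1 /gm -Uprod; apply: eq_bigr => i _; exact: UX.
Qed.

Lemma ev_expand (p : mpoly.mpoly R Qv) :
  (ev p : Om R) = \sum_(m <- msupp p) p@_m *: (<< gm m >> : Om R).
Proof.
rewrite /mmap; apply: eq_bigr => m _; by rewrite mmap1_gm mulr_algl.
Qed.

Lemma ev_eq0 (p : mpoly.mpoly R Qv) : (0 < n)%N -> ev p = 0 -> p = 0.
Proof.
move=> n0 e0; apply/mpolyP => m; rewrite mcoeff0.
case: (boolP (m \in msupp p)) => [mp|]; last exact: memN_msupp_eq0.
have := coef_sum (fun m => p@_m) (msupp_uniq p) (in2W (gm_inj n0)) mp.
by rewrite -ev_expand e0 monalg.mcoeff0.
Qed.

End Indep.

From mathcomp Require Import zify.

Section Indep2.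
Context (n r : nat).
Local Notation R := r.+1.
Local Notation ev := (mmap (in_alg (Lau R)) (@Y n R)).
Local Notation S := [tuple mesym R Qv i.+1 | i < R].

Lemma unlift_widen (i : 'I_r) : unlift ord_max (widen_ord (leqnSn r) i) = Some i.
Proof.
have -> : widen_ord (leqnSn r) i = lift ord_max i by apply: val_inj; rewrite [RHS]lift_max.
exact: liftK.
Qed.

Lemma indep (s : seq (lam R)) (c : lam R -> Qv) : (0 < n)%N -> uniq s ->
  \sum_(l <- s) c l *: M n l = 0 -> forall l, l \in s -> c l = 0.
Proof.
move=> n0 us H l0 l0s.
pose N := (\sum_(l <- s) `|l.2|)%N.
have Nge l : l \in s -> 0 <= l.2 + N%:Z.
  move=> ls; have le : (`|l.2| <= N)%N by rewrite /N (bigD1_seq l) //= leq_addr.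
  lia.
pose ml (l : lam R) : multinom R :=
  [multinom (if unlift ord_max i is Some j then l.1 j else absz (l.2 + N%:Z)%R) | i < R].
have lamof_ml l : l \in s -> lamof (ml l) = (l.1, l.2 + N%:Z).
  move=> ls; rewrite /lamof; congr (_, _).
    by apply/ffunP => i; rewrite ffunE mnmE unlift_widen.
  by rewrite mnmE unlift_none gez0_abs //; exact: Nge.
have M_ml l : l \in s -> M n (lamof (ml l)) = M n l * E n R R ^+ N.
  move=> ls; rewrite lamof_ml //.
  have -> : (l.1, l.2 + N%:Z) = addl l ([ffun=> 0%N], N%:Z).
    by rewrite /addl; congr (_, _); apply/ffunP => i; rewrite !ffunE addn0.
  rewrite M_add; congr (_ * _).
  by rewrite /M /= big1 ?mul1r // => i _; rewrite ffunE expr0.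
have ml_inj : {in s &, injective ml}.
  move=> l1 l2 l1s l2s E.
  have := congr1 (@lamof r) E; rewrite !lamof_ml //; case: l1 {l1s E} => a1 b1; case: l2 {l2s} => a2 b2 /=.
  by case=> -> /addIr ->.
pose t : mpoly.mpoly R Qv := \sum_(l <- s) c l *: 'X_[ml l].
have evt : ev (t \mPo S) = 0.
  rewrite /t [X in mmap _ _ X]raddf_sum /= raddf_sum /=.
  transitivity ((\sum_(l <- s) c l *: M n l) * E n R R ^+ N); last by rewrite H mul0r.
  rewrite mulr_suml big_seq [RHS]big_seq; apply: eq_bigr => l ls.
  by rewrite comp_mpolyZ evZ ev_comp -M_lamof M_ml // scalerAl.
have t0 : t = 0 by apply: msym_fundamental_un0; exact: ev_eq0 evt.
have := congr1 (fun p : mpoly.mpoly R Qv => p@_(ml l0)) t0.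
rewrite /= mcoeff0 /t raddf_sum /= (bigD1_seq l0) //= mcoeffZ mcoeffX eqxx mulr1.
rewrite big_seq_cond big1 ?addr0 // => l /andP[ls nl].
rewrite mcoeffZ mcoeffX; case: eqP => [/(ml_inj _ _ ls l0s) E|]; last by rewrite mulr0.
by rewrite E eqxx in nl.
Qed.

End Indep2.

Theorem proposition5p2p3 (n r : nat) :
  (2 <= n)%N -> (1 <= r)%N ->
  (forall l : lam r, inZ n r (mono n r l)) /\
  (forall T : op r, inZ n r T ->
     exists (s : seq (lam r)) (c : lam r -> Qv),
       forall x : Om r, T x = \sum_(l <- s) c l *: mono n r l x) /\
  (forall (s : seq (lam r)) (c : lam r -> Qv), uniq s ->
     (forall x : Om r, \sum_(l <- s) c l *: mono n r l x = 0) ->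
     forall l, l \in s -> c l = 0).
Proof.
case: r => [//|r] n2 _.
split; first exact: mono_inZ.
split.
  move=> T /span_inZ [a [Ha ->]].
  have [s [c [_ ->]]] := Sp_repr Ha.
  exists s, c => x; rewrite /mulop mulr_suml; apply: eq_bigr => l _.
  rewrite monoE; exact: mulLZl.
move=> s c us H l ls; apply: (@indep n r s c _ us) => //; first exact: ltnW.
rewrite -[RHS](H (1 : Lau r.+1)); apply: eq_bigr => l' _.
by rewrite monoE mulr1.
Qed.
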